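(* In the database model described in the context, let $0<\alpha\le1$, let $t_\alpha\ge0$ be the largest $t\ge0$ such that $P(LR(S)\ge t)\ge\alpha$, and let $\mathcal D_\alpha=\{i\in\{1,\dots,N\}: LR(P_i)\ge t_\alpha\}$. Then $t_\alpha$ exists, and, if $\pi_{\mathcal D}>0$, \[ P(R\in\mathcal D_\alpha\mid R\in\mathcal D)=P(LR(S)\ge t_\alpha)\ge\alpha, \] so that $P(R\in\mathcal D_\alpha)\ge\alpha\,P(R\in\mathcal D)$.
   Context: Let $E$ be a countable set and let $S$, $G$ be $E$-valued random variables such that for every $e\in E$, $P(S=e)>0$ implies $P(G=e)>0$. For $e\in E$ define the likelihood ratio $LR(e)=P(S=e)/P(G=e)$ if $P(G=e)>0$ and $LR(e)=0$ otherwise. Database model: fix $N\ge1$. Let $R$ be a random variable with values in $\{0,1,\dots,N\}$; we write $R\in\mathcal D$ for $R\in\{1,\dots,N\}$ and $R\notin\mathcal D$ for $R=0$. Put $\pi_i=P(R=i)$ for $1\le i\le N$ and $\pi_{\mathcal D}=\sum_{i=1}^N\pi_i$. There are $E$-valued random variables $P_1,\dots,P_N$ such that conditionally on $R=i$ with $1\le i\le N$, they are independent, $P_i$ has the distribution of $S$ and $P_j$ ($j\ne i$) has the distribution of $G$; and conditionally on $R=0$ they are independent, each with the distribution of $G$. *)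

(* Defs.v *)
From Stdlib Require Import Reals Lra Lia Classical.
Open Scope R_scope.

(* A probability on a sample space Omega, defined on all events (predicates),
   nonnegative, total mass 1, countably additive on pairwise disjoint events.
   (All random variables in the statement are discrete, so the power set is
   an adequate sigma-algebra.) *)
Record prob_space (Omega : Type) := {
  Pr : (Omega -> Prop) -> R;
  Pr_nonneg : forall A, 0 <= Pr A;
  Pr_total : Pr (fun _ => True) = 1;
  Pr_sigma_additive : forall A : nat -> Omega -> Prop,
    (forall m n w, m <> n -> A m w -> A n w -> False) ->
    infinite_sum (fun n => Pr (A n)) (Pr (fun w => exists n, A n w))
}.
Arguments Pr {Omega} _ _.

Definition LR {Omega E : Type} (P : prob_space Omega) (S G : Omega -> E) (e : E) : R :=
  if Rlt_dec 0 (Pr P (fun w => G w = e))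
  then Pr P (fun w => S w = e) / Pr P (fun w => G w = e)
  else 0.

Fixpoint prod1 (n : nat) (f : nat -> R) : R :=
  match n with
  | O => 1
  | S m => prod1 m f * f (S m)
  end.

(* Database model: R takes values in {0,...,N}; conditionally on R = i (1<=i<=N)
   P_1..P_N are independent, P_i ~ S and P_j ~ G (j<>i); conditionally on R = 0
   they are independent, all ~ G. *)
Definition database_model {Omega E : Type} (P : prob_space Omega)
  (S G : Omega -> E) (N : nat) (Rv : Omega -> nat) (Pv : nat -> Omega -> E) : Prop :=
  (forall w, (Rv w <= N)%nat) /\
  (forall (i : nat) (e : nat -> E), (i <= N)%nat ->
     Pr P (fun w => Rv w = i /\ forall j, (1 <= j <= N)%nat -> Pv j w = e j)
     = Pr P (fun w => Rv w = i) *
       prod1 N (fun j => if Nat.eq_dec j i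
                         then Pr P (fun w => S w = e j)
                         else Pr P (fun w => G w = e j))).

Definition is_t_alpha {Omega E : Type} (P : prob_space Omega) (S G : Omega -> E)
  (alpha t : R) : Prop :=
  0 <= t /\ Pr P (fun w => LR P S G (S w) >= t) >= alpha /\
  forall t', 0 <= t' -> Pr P (fun w => LR P S G (S w) >= t') >= alpha -> t' <= t.

(* Main.v *)
Require Import Defs.
From Stdlib Require Import Reals Lra Lia Classical.
From Stdlib Require Import FunctionalExtensionality PropExtensionality.
Open Scope R_scope.
From Stdlib Require Import FunctionalExtensionality PropExtensionality.

Lemma Pr_ext {Omega} (P : prob_space Omega) (A B : Omega -> Prop) :
  (forall w, A w <-> B w) -> Pr P A = Pr P B.
Proof.
  intro H. replace B with A; [reflexivity|].
  apply functional_extensionality; intro w; apply propositional_extensionality; apply H.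
Qed.

Lemma Pr_empty {Omega} (P : prob_space Omega) (A : Omega -> Prop) :
  (forall w, ~ A w) -> Pr P A = 0.
Proof.
  intro H.
  pose proof (Pr_sigma_additive _ P (fun _ => A)) as Hs.
  assert (Hd : forall (m n : nat) w, m <> n -> A w -> A w -> False) by (intros; eapply H; eauto).
  specialize (Hs Hd). cbv beta in Hs.
  rewrite (Pr_ext P (fun w => exists n : nat, A w) A) in Hs
    by (intro w; split; [intros [_ h]; exact h | intro h; exists 0%nat; exact h]).
  pose proof (Pr_nonneg _ P A) as Hn.
  destruct (Rle_lt_or_eq_dec _ _ Hn) as [Hlt|Heq]; [|auto].
  exfalso. destruct (Hs (Pr P A) Hlt) as [K HK].
  specialize (HK (S K) ltac:(lia)).
  rewrite sum_cte in HK. unfold Rdist in HK.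
  rewrite (S_INR (S K)) in HK.
  pose proof (pos_INR (S K)).
  replace (Pr P A * (INR (S K) + 1) - Pr P A) with (Pr P A * INR (S K)) in HK by ring.
  rewrite Rabs_right in HK by (apply Rle_ge; apply Rmult_le_pos; lra).
  rewrite S_INR in HK. pose proof (pos_INR K). nra.
Qed.

Lemma sum_disj {Omega} (P : prob_space Omega) (A : nat -> Omega -> Prop) (B : Omega -> Prop) :
  (forall m n w, m <> n -> A m w -> A n w -> False) ->
  (forall w, B w <-> exists n, A n w) ->
  infinite_sum (fun n => Pr P (A n)) (Pr P B).
Proof.
  intros Hd HB. rewrite (Pr_ext P B (fun w => exists n, A n w)) by exact HB.
  apply Pr_sigma_additive; exact Hd.
Qed.

Lemma inf_sum_scal (a : nat -> R) l c :
  infinite_sum a l -> infinite_sum (fun n => c * a n) (c * l).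
Proof.
  intro H.
  assert (Un_cv (fun n => c * sum_f_R0 a n) (c * l)).
  { apply (CV_mult (fun _ => c) (fun n => sum_f_R0 a n)); [|exact H].
    intros eps He; exists 0%nat; intros; unfold Rdist; rewrite Rminus_diag, Rabs_R0; lra. }
  intros eps He. destruct (H0 eps He) as [K HK]. exists K; intros n Hn.
  specialize (HK n Hn).
  replace (sum_f_R0 (fun n0 : nat => c * a n0) n) with (c * sum_f_R0 a n); [exact HK|].
  rewrite scal_sum. apply sum_eq; intros; ring.
Qed.

Lemma inf_sum_ext (a b : nat -> R) l : (forall n, a n = b n) -> infinite_sum a l -> infinite_sum b l.
Proof.
  intros H. replace b with a; [auto|]. apply functional_extensionality; auto.
Qed.

Fixpoint fsum (n : nat) (g : nat -> R) : R :=
  match n with O => 0 | S m => fsum m g + g m end.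

Lemma sum_f_R0_fsum (c : nat -> R) n : sum_f_R0 c n = c 0%nat + fsum n (fun k => c (S k)).
Proof. induction n; simpl; [ring|rewrite IHn; ring]. Qed.

Lemma inf_sum_eventually (c : nat -> R) l v K :
  infinite_sum c l -> (forall n, (n >= K)%nat -> sum_f_R0 c n = v) -> l = v.
Proof.
  intros H Hv. apply (uniqueness_sum c); [exact H|].
  intros eps He; exists K; intros n Hn; rewrite Hv by lia; unfold Rdist; rewrite Rminus_diag, Rabs_R0; lra.
Qed.

Lemma Pr_add2 {Omega} (P : prob_space Omega) (A B C : Omega -> Prop) :
  (forall w, A w -> B w -> False) -> (forall w, C w <-> A w \/ B w) ->
  Pr P C = Pr P A + Pr P B.
Proof.
  intros Hd HC.
  set (D := fun n : nat => match n with O => A | 1%nat => B | _ => fun _ => False end).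
  assert (Hs : infinite_sum (fun n => Pr P (D n)) (Pr P C)).
  { apply sum_disj.
    - intros m n w Hmn. destruct m as [|[|m]], n as [|[|n]]; simpl; try tauto; try lia; eauto.
    - intro w; rewrite HC; split.
      + intros [h|h]; [exists 0%nat|exists 1%nat]; exact h.
      + intros [[|[|n]] h]; simpl in h; tauto. }
  apply (inf_sum_eventually _ _ _ 1%nat Hs). intros n Hn.
  destruct n as [|n]; [lia|]. rewrite sum_f_R0_fsum. simpl.
  induction n; simpl; [ring|].
  rewrite <- IHn by lia. rewrite (Pr_empty P (fun _ => False)) by tauto. ring.
Qed.

Lemma Pr_mono {Omega} (P : prob_space Omega) (A B : Omega -> Prop) :
  (forall w, A w -> B w) -> Pr P A <= Pr P B.
Proof.
  intro H. rewrite (Pr_add2 P A (fun w => B w /\ ~ A w) B).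
  - pose proof (Pr_nonneg _ P (fun w => B w /\ ~ A w)); lra.
  - intros w h [_ h']; tauto.
  - intro w; split; [intro; destruct (classic (A w)); tauto | intros [h|[h _]]; auto].
Qed.

Lemma cont_above {Omega} (P : prob_space Omega) (A : nat -> Omega -> Prop) alpha :
  (forall n w, A (S n) w -> A n w) -> (forall n, Pr P (A n) >= alpha) ->
  Pr P (fun w => forall n, A n w) >= alpha.
Proof.
  intros Hdec Hal.
  assert (mono : forall n m w, (n <= m)%nat -> A m w -> A n w).
  { intros n m w Hnm; induction Hnm; auto. }
  assert (find : forall m w, A 0%nat w -> ~ A m w -> exists k, (k < m)%nat /\ A k w /\ ~ A (S k) w).
  { induction m; intros w H0 Hm; [tauto|].
    destruct (classic (A m w)) as [h|h].
    - exists m; split; [lia|auto].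
    - destruct (IHm w H0 h) as [k Hk]; exists k; split; [lia|tauto]. }
  set (B := fun n w => A n w /\ ~ A (S n) w).
  assert (F1 : forall m, Pr P (A 0%nat) = Pr P (A m) + fsum m (fun k => Pr P (B k))).
  { induction m; simpl; [ring|].
    rewrite IHm. rewrite (Pr_add2 P (A (S m)) (B m) (A m)); [ring| |].
    - intros w h [_ h']; tauto.
    - intro w; split; [intro; destruct (classic (A (S m) w)); unfold B; tauto|].
      intros [h|[h _]]; auto. }
  set (D := fun n => match n with O => fun w => forall n, A n w | S k => B k end).
  assert (Hs : infinite_sum (fun n => Pr P (D n)) (Pr P (A 0%nat))).
  { apply sum_disj.
    - intros m n w Hmn. destruct m as [|m], n as [|n]; simpl; unfold B.
      + lia.
      + intros h [_ h']; auto.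
      + intros [_ h'] h; auto.
      + intros [h1 h2] [h3 h4].
        destruct (Nat.lt_total m n) as [l|[e|l]]; [|lia|].
        * apply h2; apply (mono (S m) n); auto; lia.
        * apply h4; apply (mono (S n) m); auto; lia.
    - intro w; split.
      + intro h0. destruct (classic (forall n, A n w)) as [hall|hn].
        * exists 0%nat; exact hall.
        * apply not_all_ex_not in hn. destruct hn as [m hm].
          destruct (find m w h0 hm) as [k [_ hk]]. exists (S k); exact hk.
      + intros [[|n] h]; simpl in h; [apply h|]. destruct h as [h _]; apply (mono 0%nat n); auto; lia. }
  apply Rnot_lt_ge; intro Hlt.
  destruct (Hs (alpha - Pr P (fun w => forall n, A n w))) as [K HK]; [lra|].
  specialize (HK K (le_n K)). rewrite sum_f_R0_fsum in HK. simpl in HK.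
  specialize (F1 K). specialize (Hal K). unfold Rdist in HK.
  apply Rabs_def2 in HK. unfold B in *. lra.
Qed.

Lemma exists_thr {Omega} (P : prob_space Omega) (L : Omega -> R) alpha :
  (forall w, 0 <= L w) -> 0 < alpha <= 1 ->
  exists t, 0 <= t /\ Pr P (fun w => L w >= t) >= alpha /\
    forall t', 0 <= t' -> Pr P (fun w => L w >= t') >= alpha -> t' <= t.
Proof.
  intros HL Ha.
  set (f := fun t => Pr P (fun w => L w >= t)).
  assert (fmono : forall t1 t2, t1 <= t2 -> f t2 <= f t1).
  { intros; unfold f; apply Pr_mono; intros; lra. }
  assert (Hub : exists n0, f (INR n0) < alpha).
  { apply NNPP; intro Hn.
    assert (Hall : forall n, Pr P (fun w => L w >= INR n) >= alpha).
    { intro n; apply Rnot_lt_ge; intro h; apply Hn; exists n; exact h. }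
    pose proof (cont_above P (fun n w => L w >= INR n) alpha) as Hc.
    cbv beta in Hc.
    assert (Hd : forall n w, L w >= INR (S n) -> L w >= INR n) by (intros n w h; rewrite S_INR in h; lra).
    specialize (Hc Hd Hall).
    rewrite (Pr_empty P) in Hc; [lra|].
    intros w h. destruct (INR_unbounded (L w)) as [n hn]. specialize (h n). lra. }
  destruct Hub as [n0 Hn0].
  set (T := fun t => 0 <= t /\ f t >= alpha).
  assert (Hb : bound T).
  { exists (INR n0). intros t [_ ht]. apply Rnot_lt_le; intro hlt.
    pose proof (fmono (INR n0) t ltac:(lra)). lra. }
  assert (HT0 : T 0).
  { split; [lra|]. unfold f. rewrite (Pr_ext P _ (fun _ => True)) by (intro w; split; auto; intros _; apply Rle_ge; auto).
    rewrite Pr_total; lra. }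
  destruct (completeness T Hb (ex_intro _ 0 HT0)) as [m [Hm1 Hm2]].
  exists m. split; [apply Hm1; exact HT0|]. split.
  - pose proof (cont_above P (fun n w => L w >= m - / (INR n + 1)) alpha) as Hc.
    cbv beta in Hc.
    assert (Hd : forall n w, L w >= m - / (INR (S n) + 1) -> L w >= m - / (INR n + 1)).
    { intros n w h. rewrite S_INR in h. pose proof (pos_INR n).
      assert (/ (INR n + 1 + 1) <= / (INR n + 1)) by (apply Rinv_le_contravar; lra). lra. }
    assert (Hall : forall n, Pr P (fun w => L w >= m - / (INR n + 1)) >= alpha).
    { intro n. pose proof (pos_INR n).
      assert (Hp : 0 < / (INR n + 1)) by (apply Rinv_0_lt_compat; lra).
      destruct (classic (exists t, T t /\ t > m - / (INR n + 1))) as [[t [[_ Ht] Htm]]|Hno].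
      - pose proof (fmono (m - / (INR n + 1)) t ltac:(lra)). unfold f in *. lra.
      - exfalso. assert (is_upper_bound T (m - / (INR n + 1))).
        { intros t Ht. apply Rnot_lt_le; intro h; apply Hno; exists t; split; auto. }
        specialize (Hm2 _ H0). lra. }
    specialize (Hc Hd Hall).
    rewrite (Pr_ext P _ (fun w => L w >= m)) in Hc; [exact Hc|].
    intro w; split.
    + intro h. apply Rnot_lt_ge; intro hl.
      destruct (INR_unbounded (/ (m - L w))) as [n hn].
      specialize (h n). pose proof (pos_INR n).
      assert (Hq : 0 < / (m - L w)) by (apply Rinv_0_lt_compat; lra).
      assert (Hx : / (INR n + 1) < / / (m - L w)) by (apply Rinv_lt_contravar; nra).
      rewrite Rinv_inv in Hx. lra.
    + intros h n. pose proof (pos_INR n).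
      assert (0 < / (INR n + 1)) by (apply Rinv_0_lt_compat; lra). lra.
  - intros t' H1 H2. apply Hm1. split; auto.
Qed.

Lemma prod1_ext N a b : (forall j, (1 <= j <= N)%nat -> a j = b j) -> prod1 N a = prod1 N b.
Proof.
  induction N; intro H; simpl; [reflexivity|].
  rewrite IHN by (intros; apply H; lia). rewrite H by lia. reflexivity.
Qed.

Lemma prod1_one N : prod1 N (fun _ => 1) = 1.
Proof. induction N; simpl; [reflexivity|rewrite IHN; ring]. Qed.

Lemma prod1_split N k a b c : (1 <= k <= N)%nat ->
  (forall j, (1 <= j <= N)%nat -> j <> k -> a j = b j) -> a k = b k * c ->
  prod1 N a = prod1 N b * c.
Proof.
  induction N; intros Hk Hab Hc; [lia|]. simpl.
  destruct (Nat.eq_dec k (S N)) as [->|hne].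
  - rewrite (prod1_ext N a b) by (intros; apply Hab; lia). rewrite Hc; ring.
  - rewrite IHN; [| lia | intros; apply Hab; lia | exact Hc]. rewrite (Hab (S N)) by lia. ring.
Qed.

Definition fx (i k j : nat) : bool := orb (Nat.eqb j i) (Nat.leb j k).

Lemma fx_S i k j : fx i (S k) j = true <-> j = S k \/ fx i k j = true.
Proof.
  unfold fx. rewrite !Bool.orb_true_iff, !Nat.eqb_eq, !Nat.leb_le. lia.
Qed.

Lemma fx_0 i j : (1 <= j)%nat -> fx i 0 j = true <-> j = i.
Proof.
  intro. unfold fx. rewrite !Bool.orb_true_iff, !Nat.eqb_eq, !Nat.leb_le. lia.
Qed.

Lemma fx_N i N j : (j <= N)%nat -> fx i N j = true.
Proof.
  intro. unfold fx. rewrite !Bool.orb_true_iff, !Nat.eqb_eq, !Nat.leb_le. lia.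
Qed.

Lemma marginal {Omega E : Type} (P : prob_space Omega) (enc : E -> nat)
  (Henc : forall x y, enc x = enc y -> x = y) (Sr G : Omega -> E) (N : nat)
  (Rv : Omega -> nat) (Pv : nat -> Omega -> E)
  (Hdb : forall (i : nat) (e : nat -> E), (i <= N)%nat ->
     Pr P (fun w => Rv w = i /\ forall j, (1 <= j <= N)%nat -> Pv j w = e j)
     = Pr P (fun w => Rv w = i) *
       prod1 N (fun j => if Nat.eq_dec j i
                         then Pr P (fun w => Sr w = e j)
                         else Pr P (fun w => G w = e j)))
  (i : nat) (Hi : (1 <= i <= N)%nat) (x : E) :
  Pr P (fun w => Rv w = i /\ Pv i w = x) = Pr P (fun w => Rv w = i) * Pr P (fun w => Sr w = x).
Proof.
  set (F := fun j (y : E) => if Nat.eq_dec j i then Pr P (fun w => Sr w = y) else Pr P (fun w => G w = y)).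
  set (ev := fun k (e : nat -> E) w => Rv w = i /\ forall j, (1 <= j <= N)%nat -> fx i k j = true -> Pv j w = e j).
  set (pr := fun k (e : nat -> E) => prod1 N (fun j => if fx i k j then F j (e j) else 1)).
  set (Inv := fun k => forall e, Pr P (ev k e) = Pr P (fun w => Rv w = i) * pr k e).
  assert (HN : Inv N).
  { intro e. unfold ev, pr.
    rewrite (Pr_ext P _ (fun w => Rv w = i /\ forall j, (1 <= j <= N)%nat -> Pv j w = e j)).
    - rewrite Hdb by lia. f_equal. apply prod1_ext. intros j Hj. rewrite fx_N by lia. reflexivity.
    - intro w; split.
      + intros [h1 h2]; split; [exact h1|]. intros j Hj; apply h2; [exact Hj| apply fx_N; lia].
      + intros [h1 h2]; split; [exact h1|]. intros j Hj _; apply h2; exact Hj. }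
  assert (Hg : infinite_sum (fun n => Pr P (fun w => enc (G w) = n)) 1).
  { rewrite <- (Pr_total _ P). apply sum_disj.
    - intros m n w hmn h1 h2; lia.
    - intro w; split; [intros _; exists (enc (G w)); reflexivity|auto]. }
  assert (Hstep : forall k, (S k <= N)%nat -> Inv (S k) -> Inv k).
  { intros k Hk IH e.
    destruct (Nat.eq_dec (S k) i) as [Hki|Hki].
    - assert (Hfx : forall j, fx i (S k) j = fx i k j).
      { intro j. apply Bool.eq_iff_eq_true. rewrite fx_S. unfold fx.
        rewrite !Bool.orb_true_iff, !Nat.eqb_eq, !Nat.leb_le. lia. }
      unfold ev, pr. rewrite (Pr_ext P _ (ev (S k) e)).
      + rewrite IH. unfold pr. f_equal. apply prod1_ext; intros; rewrite Hfx; reflexivity.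
      + intro w; unfold ev; split; intros [h1 h2]; split; auto; intros j Hj Hf; apply h2; auto;
          rewrite ?Hfx in *; auto.
    - set (C := Pr P (fun w => Rv w = i) * pr k e).
      set (g := fun n => Pr P (fun w => enc (G w) = n)).
      set (A := fun n w => ev k e w /\ enc (Pv (S k) w) = n).
      assert (HA : infinite_sum (fun n => Pr P (A n)) (Pr P (ev k e))).
      { apply sum_disj.
        - intros m n w hmn [_ h1] [_ h2]; lia.
        - intro w; split; [intro h; exists (enc (Pv (S k) w)); split; auto|intros [n [h _]]; auto]. }
      assert (Heach : forall n, C * g n = Pr P (A n)).
      { intro n. destruct (classic (exists y, enc y = n)) as [[y hy]|hno].
        - set (e' := fun j => if Nat.eq_dec j (S k) then y else e j).
          rewrite (Pr_ext P (A n) (ev (S k) e')).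
          + rewrite IH. unfold C, g. rewrite (Pr_ext P (fun w => enc (G w) = n) (fun w => G w = y)).
            * unfold pr. rewrite Rmult_assoc. f_equal.
              symmetry; apply (prod1_split N (S k)); [lia| |].
              -- intros j Hj hj. unfold e'. destruct (Nat.eq_dec j (S k)); [lia|].
                 replace (fx i (S k) j) with (fx i k j); [reflexivity|].
                 apply Bool.eq_iff_eq_true. rewrite fx_S. split; [intro h; right; exact h| intros [h|h]; [lia|exact h]].
              -- unfold e'. destruct (Nat.eq_dec (S k) (S k)); [|lia].
                 replace (fx i (S k) (S k)) with true by (symmetry; apply fx_S; auto).
                 replace (fx i k (S k)) with false.
                 ++ unfold F. destruct (Nat.eq_dec (S k) i); [lia|]. ring.
                 ++ symmetry. unfold fx. apply Bool.orb_false_iff. split.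
                    ** apply Nat.eqb_neq; auto.
                    ** apply Nat.leb_gt; lia.
            * intro w; split; intro h; [apply Henc; congruence|subst; auto].
          + intro w; unfold A, ev, e'; split.
            * intros [[h1 h2] h3]; split; auto. intros j Hj Hf.
              destruct (Nat.eq_dec j (S k)) as [->|hne].
              -- apply Henc; congruence.
              -- apply h2; auto. apply fx_S in Hf; destruct Hf; [lia|auto].
            * intros [h1 h2]; split; [split; auto|].
              -- intros j Hj Hf. specialize (h2 j Hj). destruct (Nat.eq_dec j (S k)) as [->|hne].
                 ++ exfalso. unfold fx in Hf. apply Bool.orb_true_iff in Hf.
                    rewrite Nat.eqb_eq, Nat.leb_le in Hf. lia.
                 ++ apply h2. apply fx_S; auto.
              -- specialize (h2 (S k) ltac:(lia) ltac:(apply fx_S; auto)).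
                 destruct (Nat.eq_dec (S k) (S k)); [|lia]. rewrite h2; auto.
        - unfold g. rewrite (Pr_empty P (fun w => enc (G w) = n)) by (intros w h; apply hno; eauto).
          rewrite (Pr_empty P (A n)) by (intros w [_ h]; apply hno; eauto). ring. }
      pose proof (inf_sum_scal _ _ C Hg) as Hs.
      apply (inf_sum_ext _ _ _ Heach) in Hs.
      pose proof (uniqueness_sum _ _ _ HA Hs) as Hu. rewrite Hu. unfold C. ring. }
  assert (H0 : Inv 0%nat).
  { assert (Hd : forall d, (d <= N)%nat -> Inv (N - d)%nat).
    { induction d; intro Hd.
      - rewrite Nat.sub_0_r; exact HN.
      - apply Hstep; [lia|]. replace (S (N - S d)) with (N - d)%nat by lia. apply IHd; lia. }
    replace 0%nat with (N - N)%nat by lia. apply Hd; lia. }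
  specialize (H0 (fun _ => x)).
  rewrite (Pr_ext P _ (ev 0%nat (fun _ => x))).
  - rewrite H0. f_equal. unfold pr.
    rewrite (prod1_split N i _ (fun _ => 1) (Pr P (fun w => Sr w = x))); [rewrite prod1_one; ring| lia | |].
    + intros j Hj hj. replace (fx i 0 j) with false; [reflexivity|].
      symmetry. apply Bool.not_true_iff_false. rewrite fx_0 by lia. auto.
    + replace (fx i 0 i) with true by (symmetry; apply fx_0; lia).
      unfold F. destruct (Nat.eq_dec i i); [ring|lia].
  - intro w; unfold ev; split.
    + intros [h1 h2]; split; auto. intros j Hj Hf. apply fx_0 in Hf; [subst; auto|lia].
    + intros [h1 h2]; split; auto. apply h2; [lia|apply fx_0; lia].
Qed.

Lemma marginalQ {Omega E : Type} (P : prob_space Omega) (enc : E -> nat)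
  (Henc : forall x y, enc x = enc y -> x = y) (Sr G : Omega -> E) (N : nat)
  (Rv : Omega -> nat) (Pv : nat -> Omega -> E)
  (Hdb : forall (i : nat) (e : nat -> E), (i <= N)%nat ->
     Pr P (fun w => Rv w = i /\ forall j, (1 <= j <= N)%nat -> Pv j w = e j)
     = Pr P (fun w => Rv w = i) *
       prod1 N (fun j => if Nat.eq_dec j i
                         then Pr P (fun w => Sr w = e j)
                         else Pr P (fun w => G w = e j)))
  (i : nat) (Hi : (1 <= i <= N)%nat) (Q : E -> Prop) :
  Pr P (fun w => Rv w = i /\ Q (Pv i w)) = Pr P (fun w => Rv w = i) * Pr P (fun w => Q (Sr w)).
Proof.
  set (A := fun n w => Rv w = i /\ Q (Pv i w) /\ enc (Pv i w) = n).
  set (h := fun n => Pr P (fun w => Q (Sr w) /\ enc (Sr w) = n)).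
  assert (HA : infinite_sum (fun n => Pr P (A n)) (Pr P (fun w => Rv w = i /\ Q (Pv i w)))).
  { apply sum_disj.
    - intros m n w hmn [_ [_ h1]] [_ [_ h2]]; lia.
    - intro w; split; [intros [h1 h2]; exists (enc (Pv i w)); unfold A; tauto|intros [n [h1 [h2 _]]]; auto]. }
  assert (Hh : infinite_sum h (Pr P (fun w => Q (Sr w)))).
  { apply sum_disj.
    - intros m n w hmn [_ h1] [_ h2]; lia.
    - intro w; split; [intro h1; exists (enc (Sr w)); auto|intros [n [h1 _]]; auto]. }
  assert (Heach : forall n, Pr P (fun w => Rv w = i) * h n = Pr P (A n)).
  { intro n. unfold h, A. destruct (classic (exists y, enc y = n /\ Q y)) as [[y [hy hq]]|hno].
    - rewrite (Pr_ext P (fun w => Q (Sr w) /\ enc (Sr w) = n) (fun w => Sr w = y)).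
      + rewrite (Pr_ext P (fun w => Rv w = i /\ Q (Pv i w) /\ enc (Pv i w) = n) (fun w => Rv w = i /\ Pv i w = y)).
        * symmetry; eapply marginal; eauto.
        * intro w; split; [intros [h1 [h2 h3]]; split; auto; apply Henc; congruence|intros [h1 h2]; subst; auto].
      + intro w; split; [intros [h2 h3]; apply Henc; congruence|intro; subst; auto].
    - rewrite (Pr_empty P (fun w => Q (Sr w) /\ enc (Sr w) = n)) by (intros w [h1 h2]; apply hno; eauto).
      rewrite (Pr_empty P (fun w => Rv w = i /\ Q (Pv i w) /\ enc (Pv i w) = n)) by (intros w [_ [h1 h2]]; apply hno; eauto).
      ring. }
  pose proof (inf_sum_scal _ _ (Pr P (fun w => Rv w = i)) Hh) as Hs.
  apply (inf_sum_ext _ _ _ Heach) in Hs.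
  exact (uniqueness_sum _ _ _ HA Hs).
Qed.

Theorem mainTheorem5 (Omega E : Type) (P : prob_space Omega)
  (cntE : exists f : E -> nat, forall x y, f x = f y -> x = y)
  (S G : Omega -> E)
  (abscont : forall e, Pr P (fun w => S w = e) > 0 -> Pr P (fun w => G w = e) > 0)
  (N : nat) (HN : (1 <= N)%nat)
  (Rv : Omega -> nat) (Pv : nat -> Omega -> E)
  (Hdb : database_model P S G N Rv Pv)
  (alpha : R) (Halpha : 0 < alpha <= 1) :
  (exists t, is_t_alpha P S G alpha t) /\
  forall t, is_t_alpha P S G alpha t ->
    let piD := Pr P (fun w => (1 <= Rv w <= N)%nat) in
    let inDalpha := fun w => (1 <= Rv w <= N)%nat /\ LR P S G (Pv (Rv w) w) >= t in
    piD > 0 ->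
    Pr P (fun w => inDalpha w /\ (1 <= Rv w <= N)%nat) / piD
      = Pr P (fun w => LR P S G (S w) >= t) /\
    Pr P (fun w => LR P S G (S w) >= t) >= alpha /\
    Pr P inDalpha >= alpha * piD.
Proof.
  destruct cntE as [enc Henc]. destruct Hdb as [HR Hdb'].
  split.
  - destruct (exists_thr P (fun w => LR P S G (S w)) alpha) as [t Ht]; auto.
    + intro w. unfold LR. destruct (Rlt_dec 0 (Pr P (fun w0 => G w0 = S w))); [|lra].
      unfold Rdiv; apply Rmult_le_pos; [apply Pr_nonneg|left; apply Rinv_0_lt_compat; auto].
    + exists t; exact Ht.
  - intros t [Ht0 [Hta _]] piD inDalpha HpiD.
    set (p := Pr P (fun w => LR P S G (S w) >= t)).
    set (Di := fun i w => Rv w = i /\ (1 <= i <= N)%nat).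
    set (Bi := fun i w => Rv w = i /\ (1 <= i <= N)%nat /\ LR P S G (Pv i w) >= t).
    assert (HD : infinite_sum (fun i => Pr P (Di i)) piD).
    { apply sum_disj.
      - intros m n w hmn [h1 _] [h2 _]; lia.
      - intro w; split; [intro h; exists (Rv w); unfold Di; auto|intros [n [h1 h2]]; subst; auto]. }
    assert (HB : infinite_sum (fun i => Pr P (Bi i)) (Pr P inDalpha)).
    { apply sum_disj.
      - intros m n w hmn [h1 _] [h2 _]; lia.
      - intro w; split; [intro h; exists (Rv w); unfold Bi, inDalpha in *; tauto|intros [n [h1 h2]]; subst; unfold inDalpha; auto]. }
    assert (Heach : forall i, p * Pr P (Di i) = Pr P (Bi i)).
    { intro i. unfold Di, Bi. destruct (classic (1 <= i <= N)%nat) as [Hi|Hi].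
      - rewrite (Pr_ext P (fun w => Rv w = i /\ (1 <= i <= N)%nat) (fun w => Rv w = i)) by tauto.
        rewrite (Pr_ext P (fun w => Rv w = i /\ (1 <= i <= N)%nat /\ LR P S G (Pv i w) >= t)
                          (fun w => Rv w = i /\ (fun e => LR P S G e >= t) (Pv i w))) by tauto.
        rewrite (marginalQ P enc Henc S G N Rv Pv Hdb' i Hi (fun e => LR P S G e >= t)).
        unfold p. ring.
      - rewrite (Pr_empty P (fun w => Rv w = i /\ (1 <= i <= N)%nat)) by tauto.
        rewrite (Pr_empty P (fun w => Rv w = i /\ (1 <= i <= N)%nat /\ LR P S G (Pv i w) >= t)) by tauto.
        ring. }
    pose proof (inf_sum_scal _ _ p HD) as Hs.
    apply (inf_sum_ext _ _ _ Heach) in Hs.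
    pose proof (uniqueness_sum _ _ _ HB Hs) as Hk.
    rewrite (Pr_ext P (fun w => inDalpha w /\ (1 <= Rv w <= N)%nat) inDalpha) by (unfold inDalpha; tauto).
    fold p. rewrite Hk. split; [field; lra|]. split; [exact Hta|].
    apply Rle_ge. apply Rmult_le_compat_r; [lra|]. unfold p; lra.
Qed.
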